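(* A metrizable space $X$ satisfies $S_1(\mathcal{K}_{\Omega},\mathcal{K}_{\Omega})$ if and only if $vet_1(Q_p(X,\mathbb{D}))=\omega$.
   Context: A function $f:X\to Y$ is quasicontinuous if for every $x\in X$, every open $V\ni f(x)$ and every open $U\ni x$ there is a nonempty open $W\subseteq U$ with $f(W)\subseteq V$. $Q_p(X,\mathbb{D})$ is the space of quasicontinuous functions from $X$ to the discrete space $\mathbb{D}=\{0,1\}$ with the topology of pointwise convergence. $\mathcal{K}_\Omega$ is the set of families $\mathcal{U}$ of open subsets of $X$ with $X=\bigcup\{\overline{U}:U\in\mathcal{U}\}$, no element of $\mathcal{U}$ dense in $X$, and for each finite $F\subseteq X$ some $U\in\mathcal{U}$ with $F\subseteq\overline{U}$. $S_1(\mathcal{A},\mathcal{B})$: for every sequence $(A_n)_{n\in\mathbb{N}}$ of elements of $\mathcal{A}$ there are $b_n\in A_n$ with $\{b_n:n\in\mathbb{N}\}\in\mathcal{B}$. $vet_1(Z)=\omega$ means: for every $z\in Z$ and every sequence $(A_n)_{n\in\omega}$ of subsets of $Z$ with $z\in\bigcap_n\overline{A_n}$ there are $a_n\in A_n$ with $z\in\overline{\{a_n:n\in\omega\}}$. *)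

(* Defs.v *)
From HB Require Import structures.
From mathcomp Require Import all_boot all_order all_algebra.
From mathcomp Require Import all_classical all_reals.
From mathcomp Require Import topology function_spaces.
From Stdlib Require Import Reals.

Set Implicit Arguments.
Unset Strict Implicit.
Unset Printing Implicit Defensive.

Local Open Scope classical_set_scope.

Definition metrizable (X : topologicalType) : Prop :=
  exists d : X -> X -> R,
    (forall x y, Rle 0 (d x y)) /\
    (forall x y, d x y = R0 <-> x = y) /\
    (forall x y, d x y = d y x) /\
    (forall x y z, Rle (d x z) (Rplus (d x y) (d y z))) /\
    (forall U : set X, open U <->
       (forall x, U x -> exists e : R, Rlt 0 e /\
          (forall y, Rlt (d x y) e -> U y))).

Definition quasicontinuous (X Y : topologicalType) (f : X -> Y) : Prop :=
  forall (x : X) (V : set Y) (U : set X),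
    open V -> V (f x) -> open U -> U x ->
    exists W : set X, [/\ open W, W !=set0, W `<=` U & f @` W `<=` V].

Definition K_Omega (X : topologicalType) (calU : set (set X)) : Prop :=
  [/\ (forall U, calU U -> open U),
      \bigcup_(U in calU) closure U = setT,
      (forall U, calU U -> closure U <> setT) &
      (forall F : set X, finite_set F ->
         exists2 U, calU U & F `<=` closure U)].

Definition S1 (X : Type) (calA calB : set (set (set X))) : Prop :=
  forall An : nat -> set (set X), (forall n, calA (An n)) ->
    exists b : nat -> set X, (forall n, An n (b n)) /\ calB (range b).

(* The underlying set of Q_p(X, D): quasicontinuous maps X -> {0,1}
   (bool with its discrete topology), as a subset of the pointwise
   (product) topology space {ptws X -> bool}. *)
Definition Qp (X : topologicalType) : set {ptws X -> bool} :=
  [set f | quasicontinuous (f : X -> bool)].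

(* vet_1(Z) = omega for a subspace Z of a topological space T.
   Closure in the subspace Z of A ⊆ Z is (closure A) ∩ Z, and the points
   considered lie in Z, so ambient closures may be used. *)
Definition vet1_omega (T : topologicalType) (Z : set T) : Prop :=
  forall z, Z z ->
  forall A : nat -> set T, (forall n, A n `<=` Z) ->
    (forall n, closure (A n) z) ->
    exists a : nat -> T, (forall n, A n (a n)) /\ closure (range a) z.

(* Main.v *)
Require Import Defs.
From mathcomp Require Import all_boot all_classical topology function_spaces.
From Stdlib Require Import Reals Lra.
Local Open Scope classical_set_scope.

Lemma invS_pos (n : nat) : Rlt 0 (/ INR (S n)).
Proof. apply: Rinv_0_lt_compat; apply: lt_0_INR; apply/PeanoNat.Nat.lt_0_succ. Qed.

Lemma invS_le (n m : nat) : (n <= m)%N -> Rle (/ INR (S m)) (/ INR (S n)).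
Proof.
move=> /leP nm; apply: Rinv_le_contravar; first by apply: lt_0_INR; apply/PeanoNat.Nat.lt_0_succ.
by apply: le_INR; apply: le_n_S.
Qed.

Lemma arch (e : R) : Rlt 0 e -> exists M, Rlt (/ INR (S M)) e.
Proof.
move=> e0; have [N [HN N0]] := archimed_cor1 e e0.
exists N; apply: Rle_lt_trans HN; apply: Rinv_le_contravar.
  exact: lt_0_INR.
by apply: le_INR; apply: le_S; apply: le_n.
Qed.


Lemma finite_bound (T : eqType) (G : set T) (P : T -> nat -> Prop) :
  finite_set G -> (forall x N M, (N <= M)%N -> P x N -> P x M) ->
  (forall x, G x -> exists N, P x N) -> exists N, forall x, G x -> P x N.
Proof.
move=> /finite_seqP [s ->] mono; elim: s => [|a s IH] H.
  by exists O => x.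
have [Na Ha] := H a (mem_head a s).
have [Ns Hs] : exists N, forall x, [set` s] x -> P x N.
  by apply: IH => x xs; apply: H; rewrite /= inE xs orbT.
exists (maxn Na Ns) => x; rewrite /= inE => /orP [/eqP ->|xs].
  by apply: mono Ha; exact: leq_maxl.
by apply: mono (Hs x xs); exact: leq_maxr.
Qed.

Lemma inf_many (X : topologicalType) (b : nat -> set X) (G : set X) :
  K_Omega (range b) -> finite_set G ->
  forall N, exists n, (N <= n)%N /\ G `<=` closure (b n).
Proof.
move=> [_ _ nd cov] fG N.
have /choice [y Hy] : forall m, exists y, ~ closure (b m) y.
  move=> m; case: (pselect (exists y, ~ closure (b m) y)) => // H; exfalso.
  apply: (nd (b m)); first by exists m.
  apply/seteqP; split => // z _; apply: contrapT => nz; apply: H; by exists z.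
have fG' : finite_set (G `|` [set y m | m in `I_N]).
  rewrite finite_setU; split => //; apply: finite_image; exact: finite_II.
have [U [n _ <-] HU] := cov _ fG'.
exists n; split; last by move=> x Gx; apply: HU; left.
rewrite leqNgt; apply/negP => nN; apply: (Hy n); apply: HU; right; by exists n.
Qed.


Section Ptws.
Context {X : topologicalType}.

Definition NF (F : set X) (z : X -> bool) : set {ptws X -> bool} :=
  [set g | forall x, F x -> g x = z x].

Lemma nbhs_pt (z : {ptws X -> bool}) (a : X) :
  nbhs z [set g : {ptws X -> bool} | g a = z a].
Proof.
have h : {ptws, nbhs z --> z} by apply: cvg_id.
have := (pointwise_cvgP z (nbhs_filter z)).1 h a.
move=> /(_ [set z a]) H; apply: H.
by apply: open_nbhs_nbhs; split => //; apply: discrete_open.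
Qed.

Lemma nbhs_NF (z : {ptws X -> bool}) (F : set X) : finite_set F -> nbhs z (NF F z).
Proof.
move=> /finite_seqP [s ->]; elim: s => [|a s IH].
  by apply: filterS (filterT) => g _ x /=.
apply: filterS (filterI (nbhs_pt z a) IH) => g [ga gs] x /=.
rewrite inE => /orP [/eqP ->|xs] //; apply: gs; by [].
Qed.


Lemma closure_NF (A : set {ptws X -> bool}) z (F : set X) :
  closure A z -> finite_set F -> exists2 g, A g & forall x, F x -> g x = z x.
Proof.
move=> cl fF; have [g [Ag Ng]] := cl (NF F z) (nbhs_NF z F fF); by exists g.
Qed.

Lemma NF_closure (A : set {ptws X -> bool}) (z : {ptws X -> bool}) :
  (forall F : set X, finite_set F -> exists2 g, A g & forall x, F x -> g x = z x) ->
  closure A z.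
Proof.
move=> H.
pose Fil := filter_from [set F : set X | finite_set F] (fun F => NF F z).
have FF : Filter Fil.
  apply: filter_from_filter; first by exists set0; apply: finite_set0.
  move=> i j fi fj; exists (i `|` j); first by rewrite /= finite_setU.
  by move=> g Ng; split => x Hx; apply: Ng; [left|right].
have cv : {ptws, Fil --> z}.
  apply/(pointwise_cvgP z FF) => t B /nbhs_singleton Bt.
  exists [set t]; first exact: finite_set1.
  by move=> g /(_ t erefl) /= ->.
move=> U /cv [F fF NU].
have [g Ag Ng] := H F fF; exists g; split => //; exact: NU.
Qed.
End Ptws.
Arguments closure_NF {X A z F}.
Arguments NF_closure {X A z}.


Section Easy.
Variable X : topologicalType.

Lemma const_qc (b : bool) : quasicontinuous (fun _ : X => b).
Proof.
move=> x V U oV Vb oU Ux; exists U; split => //; first by exists x.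
by move=> _ [w _ <-].
Qed.

Lemma indic_qc (U : set X) : open U -> quasicontinuous (fun x => `[< closure U x >]).
Proof.
move=> oU x V U' oV Vx oU' U'x.
case: (pselect (closure U x)) => [cl|ncl].
- have [w [Uw U'w]] := cl U' (open_nbhs_nbhs (conj oU' U'x)).
  exists (U `&` U'); split.
  + exact: openI.
  + by exists w.
  + by move=> ? [].
  + move=> _ [y [Uy _] <-]; move: Vx; rewrite (asboolT cl).
    by rewrite (asboolT (subset_closure Uy)).
- exists (U' `&` ~` closure U); split.
  + apply: openI => //; apply: closed_openC; exact: closed_closure.
  + by exists x.
  + by move=> ? [].
  + move=> _ [y [_ ny] <-]; move: Vx; rewrite (asboolF ncl).
    by rewrite (asboolF ny).
Qed.

Lemma easy_dir : vet1_omega (@Qp X) -> S1 (@K_Omega X) (@K_Omega X).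
Proof.
move=> V An HA.
pose ind (U : set X) : {ptws X -> bool} := fun x => `[< closure U x >].
pose z : {ptws X -> bool} := fun _ => true.
pose A' n := [set ind U | U in An n].
have zQ : Qp z by apply: const_qc.
have A'Q n : A' n `<=` @Qp X.
  move=> _ [U AU <-]; apply: indic_qc; by case: (HA n) => + _ _ _; apply.
have clA n : closure (A' n) z.
  apply: NF_closure => F fF; case: (HA n) => _ _ _ /(_ F fF) [U AU FU].
  exists (ind U); first by exists U.
  by move=> x Fx; rewrite /ind /z; apply/asboolP; apply: FU.
have [a [Aa cla]] := V z zQ A' A'Q clA.
have /choice [b Hb] : forall n, exists U, An n U /\ ind U = a n.
  by move=> n; have [U AU <-] := Aa n; exists U.
exists b; split; first by move=> n; case: (Hb n).
have cov : forall F : set X, finite_set F -> exists2 U, range b U & F `<=` closure U.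
  move=> F fF; have [g [n _ <-] Hg] := closure_NF cla fF.
  exists (b n); first by exists n.
  move=> x Fx; have := Hg x Fx; case: (Hb n) => _ <-.
  by rewrite /z => /asboolP.
split.
- by move=> _ [n _ <-]; case: (HA n) => + _ _ _; apply; case: (Hb n).
- apply/seteqP; split => // x _.
  have [U rU xU] := cov [set x] (finite_set1 x).
  by exists U => //; apply: xU.
- by move=> _ [n _ <-]; case: (HA n) => _ _ + _; apply; case: (Hb n).
- exact: cov.
Qed.
End Easy.


Section Metric.
Local Open Scope R_scope.
Variables (X : topologicalType) (d : X -> X -> R).
Hypotheses (d0 : forall x y, 0 <= d x y)
  (dsep : forall x y, d x y = 0 <-> x = y)
  (dsym : forall x y, d x y = d y x)
  (dtri : forall x y z, d x z <= d x y + d y z)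
  (dopen : forall U : set X, open U <->
       (forall x, U x -> exists e : R, 0 < e /\ (forall y, d x y < e -> U y))).

Definition ball x r := [set y | d x y < r].

Lemma dxx x : d x x = 0. Proof. by apply/dsep. Qed.

Lemma ball_open x r : open (ball x r).
Proof.
apply/dopen => y /= xy; exists (r - d x y); split; first by rewrite /ball /= in xy; lra.
move=> z yz; rewrite /ball /= in xy *; have := dtri x y z; lra.
Qed.

Lemma open_ball U x : open U -> U x -> exists e, 0 < e /\ ball x e `<=` U.
Proof. by move=> /dopen H /H [e [e0 He]]; exists e; split. Qed.

Lemma closure_metric (A : set X) z :
  closure A z <-> forall e, 0 < e -> exists a, A a /\ d z a < e.
Proof.
split.
- move=> cl e e0.
  have hb : nbhs z (ball z e).
    apply: open_nbhs_nbhs; split; first exact: ball_open.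
    by rewrite /ball /= dxx.
  have [a [Aa Ba]] := cl (ball z e) hb.
  by exists a.
- move=> H B; rewrite nbhsE => -[U [oU Uz] UB].
  have [e [e0 eU]] := open_ball _ _ oU Uz.
  have [a [Aa da]] := H e e0; exists a; split => //; apply: UB; exact: eU.
Qed.

Lemma shrink (W0 : set X) x : open W0 -> closure W0 x ->
  exists W, [/\ open W, W `<=` W0, closure W x &
    forall y, closure W y -> y = x \/ W0 y].
Proof.
move=> oW0 clW0.
have H1 : forall m : nat, exists w, W0 w /\ d x w < / INR (S m).
  move=> m; have [w [? ?]] := (closure_metric W0 x).1 clW0 (/ INR (S m)) (invS_pos m).
  by exists w.
have [w Hw] := choice H1.
have H2 : forall m : nat, exists r, 0 < r /\ ball (w m) r `<=` W0.
  by move=> m; apply: open_ball oW0 _; case: (Hw m).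
have [r0 Hr0] := choice H2.
pose rr := fix rr (m : nat) : R := match m with
  | O => Rmin (r0 O) 1
  | S k => Rmin (rr k) (Rmin (r0 (S k)) (/ INR (S (S k)))) end.
have rr_pos : forall m, 0 < rr m.
  elim=> [|k IH].
    by apply: Rmin_pos; [case: (Hr0 O)|lra].
  apply: Rmin_pos => //; apply: Rmin_pos; [by case: (Hr0 (S k))|exact: invS_pos].
have rr_le0 : forall m, rr m <= r0 m.
  case=> [|k]; first exact: Rmin_l.
  apply: Rle_trans (Rmin_r _ _) (Rmin_l _ _).
have rr_inv : forall m, rr m <= / INR (S m).
  case=> [|k].
    by rewrite /= Rinv_1; apply: Rmin_r.
  apply: Rle_trans (Rmin_r _ _) (Rmin_r _ _).
have rr_mono : forall k m : nat, leq k m -> rr m <= rr k.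
  move=> k; elim=> [|m IH].
    by rewrite leqn0 => /eqP ->; apply: Rle_refl.
  rewrite leq_eqVlt => /orP [/eqP <-|]; first by apply: Rle_refl.
  rewrite ltnS => /IH km; apply: Rle_trans km; exact: Rmin_l.
pose W := [set u | exists m, d (w m) u < rr m / 2].
have WW0 : W `<=` W0.
  move=> u [m hm]; case: (Hr0 m) => _; apply; rewrite /ball /=.
  have := rr_le0 m; have := rr_pos m; lra.
exists W; split => //.
- apply/dopen => u [m hm]; exists (rr m / 2 - d (w m) u); split; first lra.
  move=> v uv; exists m; have := dtri (w m) u v; lra.
- apply/closure_metric => e e0; have [M HM] := arch _ e0.
  exists (w M); split.
    by exists M; rewrite dxx; have := rr_pos M; lra.
  by case: (Hw M) => _ ?; lra.
- move=> y cly; case: (pselect (y = x)) => [->|nyx]; first by left.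
  right; have dxy : 0 < d x y.
    have := d0 x y; case/Rle_lt_or_eq_dec => // h.
    by exfalso; apply: nyx; symmetry; apply/dsep.
  have [M HM] := arch _ (Rdiv_lt_0_compat _ 4 dxy ltac:(lra)).
  pose eps := Rmin (rr M / 2) (d x y / 2).
  have eps0 : 0 < eps by apply: Rmin_pos; [have := rr_pos M|]; lra.
  have [u [[m hm] dyu]] := (closure_metric W y).1 cly eps eps0.
  have e1 := Rmin_l (rr M / 2) (d x y / 2).
  have e2 := Rmin_r (rr M / 2) (d x y / 2).
  rewrite -/eps in e1 e2.
  case: (leqP M m) => Mm.
  + exfalso.
    have h1 := invS_le _ _ Mm; have h2 := rr_inv m; case: (Hw m) => _ h3.
    have h4 := dtri x (w m) u; have h5 := dtri x u y; rewrite (dsym u y) in h5.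
    have := invS_pos M; lra.
  + have h1 := rr_mono _ _ (ltnW Mm).
    case: (Hr0 m) => _; apply; rewrite /ball /=.
    have h4 := dtri (w m) u y; rewrite (dsym u y) in h4.
    have := rr_le0 m; lra.
Qed.

Definition Reg (f : X -> bool) y := exists V : set X, [/\ open V, V y & forall v, V v -> f v = f y].

Lemma Reg_open_ball f y : Reg f y -> exists e, 0 < e /\ forall b, d y b < e -> Reg f b.
Proof.
move=> [V [oV Vy fV]]; have [e [e0 eV]] := open_ball _ _ oV Vy.
exists e; split => // b yb; exists V; split => //; first exact: eV.
by move=> v Vv; rewrite (fV v Vv) (fV b (eV b yb)).
Qed.

Lemma point_piece (f g : X -> bool) x rho :
  quasicontinuous f -> quasicontinuous g -> g x = f x -> 0 < rho ->
  exists W, [/\ open W, closure W x, W `<=` ball x rho &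
    forall y, closure W y -> g y <> f y -> [/\ Reg f y, ~ Reg f x & d x y < rho]].
Proof.
move=> fq gq gx rho0.
have [rho' [r0 rr Hr]] : exists rho', [/\ 0 < rho', rho' <= rho &
    (Reg f x -> forall v, d x v < rho' -> f v = f x)].
  case: (pselect (Reg f x)) => [[V [oV Vx fV]]|nR].
    have [e [e0 eV]] := open_ball _ _ oV Vx.
    exists (Rmin rho e); split.
    - exact: Rmin_pos.
    - exact: Rmin_l.
    - move=> _ v xv; apply: fV; apply: eV; rewrite /ball /=.
      have := Rmin_r rho e; lra.
  by exists rho; split; [done|apply: Rle_refl|move=> /nR].
pose W0 := [set y | exists V : set X, [/\ open V, V y, V `<=` ball x rho' &
   forall v, V v -> g v = g x /\ f v = f y]].
have oW0 : open W0.
  apply/dopen => y [V [oV Vy Vb fV]].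
  have [e [e0 eV]] := open_ball _ _ oV Vy; exists e; split => // v yv.
  exists V; split => //; first exact: eV.
  move=> u Vu; have [g1 f1] := fV u Vu; have [_ f2] := fV v (eV v yv).
  by split => //; rewrite f1 f2.
have clW0 : closure W0 x.
  apply/closure_metric => e e0.
  have oU := ball_open x (Rmin e rho').
  have Ux : ball x (Rmin e rho') x by rewrite /ball /= dxx; apply: Rmin_pos.
  have [W1 [oW1 [w1 W1w1] W1U gW1]] :=
    gq x [set g x] _ (discrete_open _) erefl oU Ux.
  have [W2 [oW2 [w2 W2w2] W2W1 fW2]] :=
    fq w1 [set f w1] _ (discrete_open _) erefl oW1 W1w1.
  exists w2; split.
  - exists W2; split => //.
    + move=> v /W2W1 /W1U; rewrite /ball /=; have := Rmin_r e rho'; lra.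
    + move=> v W2v; split; first by apply: gW1; exists v => //; apply: W2W1.
      have -> : f v = f w1 by apply: fW2; exists v.
      by have -> : f w2 = f w1 by apply: fW2; exists w2.
  - have := W1U _ (W2W1 _ W2w2); rewrite /ball /=; have := Rmin_l e rho'; lra.
have [W [oW WW0 clW Wcl]] := shrink _ _ oW0 clW0.
exists W; split => //.
- move=> v /WW0 [V [_ Vv Vb _]]; have := Vb v Vv; rewrite /ball /=; lra.
- move=> y cly gy; case: (Wcl y cly) => [yx|[V [oV Vy Vb fV]]].
    by exfalso; apply: gy; rewrite yx.
  have dxy : d x y < rho' by apply: Vb.
  split.
  + by exists V; split => // v Vv; case: (fV v Vv).
  + move=> Rx; apply: gy; have [-> _] := fV y Vy; rewrite gx.
    by symmetry; apply: Hr.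
  + lra.
Qed.

Lemma hard_dir : S1 (@K_Omega X) (@K_Omega X) -> vet1_omega (@Qp X).
Proof.
move=> HS f fQ A AQ clA.
case: (pselect (finite_set [set: X])) => [finT|infT].
  have /choice [a Ha] : forall n, exists g, A n g /\ forall x, [set: X] x -> g x = f x.
    by move=> n; have [g Ag Hg] := closure_NF (clA n) finT; exists g.
  exists a; split; first by move=> n; case: (Ha n).
  apply: subset_closure; exists O => //.
  apply: funext => x; case: (Ha O) => _; apply; done.
have exout : forall G : set X, finite_set G -> exists p, ~ G p.
  move=> G fG; apply: contrapT => H; apply: infT; apply: sub_finite_set fG => p _.
  by apply: contrapT => np; apply: H; exists p.
pose B n := [set O : set X | [/\ open O, closure O <> setT &
  exists g, A n g /\ forall y, closure O y -> g y <> f y ->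
     Reg f y /\ exists b, ~ Reg f b /\ d b y < / INR (S n)]].
have KB : forall n (G : set X), finite_set G -> exists2 O, B n O & G `<=` closure O.
  move=> n G fG.
  have [g Ag Hg] := closure_NF (clA n) fG.
  have [p Gp] := exout G fG.
  have gQ := AQ n g Ag.
  have [Np HNp] : exists N, forall x, G x -> / INR (S N) < d x p / 2.
    apply: (@finite_bound X G (fun x N => / INR (S N) < d x p / 2) fG).
    - move=> x N M NM h; have := invS_le _ _ NM; lra.
    - move=> x Gx; apply: arch.
      have : d x p <> 0 by move/dsep => xp; apply: Gp; rewrite -xp.
      have := d0 x p; lra.
  pose rho := Rmin (/ INR (S n)) (/ INR (S Np)).
  have rho0 : 0 < rho by apply: Rmin_pos; apply: invS_pos.
  have /choice [W HW] : forall x, exists W, G x -> [/\ open W, closure W x,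
      W `<=` ball x rho & forall y, closure W y -> g y <> f y ->
      [/\ Reg f y, ~ Reg f x & d x y < rho]].
    move=> x; case: (pselect (G x)) => Gx; last by exists set0.
    have [W HW] := point_piece f g x rho fQ gQ (Hg x Gx) rho0; by exists W.
  pose O := \bigcup_(x in G) W x.
  exists O.
  - split.
    + apply: bigcup_open => x Gx; by case: (HW x Gx).
    + move=> cT; have : closure O p by rewrite cT.
      move/closure_metric => /(_ _ (invS_pos Np)) [u [[x Gx Wu] dpu]].
      case: (HW x Gx) => _ _ Wb _; have := Wb u Wu; rewrite /ball /=.
      have := HNp x Gx; have := dtri x u p; rewrite (dsym u p).
      have := Rmin_r (/ INR (S n)) (/ INR (S Np)); rewrite -/rho; lra.
    + exists g; split => // y clO ne.
      have [x Gx clW] : exists2 x, G x & closure (W x) y.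
        apply: contrapT => H.
        have [M HM] : exists M, forall x, G x -> forall u, W x u -> ~ d y u < / INR (S M).
          apply: (@finite_bound X G
            (fun x M => forall u, W x u -> ~ d y u < / INR (S M)) fG).
        * move=> x N M NM h u Wu lt; apply: (h u Wu); have := invS_le _ _ NM; lra.
        * move=> x Gx; have nc : ~ closure (W x) y by move=> c; apply: H; exists x.
          case: (pselect (exists e, 0 < e /\ forall u, W x u -> ~ d y u < e)) =>
            [[e [e0 He]]|ne']; last first.
            exfalso; apply: nc; apply/closure_metric => e e0; apply: contrapT => nu.
            apply: ne'; exists e; split => // u Wu lt; apply: nu; by exists u.
          have [M HM] := arch _ e0; exists M => u Wu lt; apply: (He u Wu); lra.
        have [u [[x Gx Wu] lt]] := (closure_metric O y).1 clO _ (invS_pos M).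
        exact: HM x Gx u Wu lt.
      case: (HW x Gx) => _ _ _ /(_ y clW ne) [Ry nRx dxy].
      split => //; exists x; split => //.
      have := Rmin_l (/ INR (S n)) (/ INR (S Np)); rewrite -/rho; lra.
  - move=> x Gx; case: (HW x Gx) => _ clx _ _.
    have sub : W x `<=` O by move=> u Wu; exists x.
    exact: (closure_subset sub clx).
have KBn : forall n, K_Omega (B n).
  move=> n; split.
  - by move=> O [].
  - apply/seteqP; split => // x _; have [O BO xO] := KB n [set x] (finite_set1 x).
    by exists O => //; apply: xO.
  - by move=> O [].
  - exact: KB n.
have [b [Bb Kb]] := HS B KBn.
have /choice [a Ha] : forall n, exists g, A n g /\ forall y, closure (b n) y ->
    g y <> f y -> Reg f y /\ exists b', ~ Reg f b' /\ d b' y < / INR (S n).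
  by move=> n; case: (Bb n) => _ _ [g Hg]; exists g.
exists a; split; first by move=> n; case: (Ha n).
apply: NF_closure => G fG.
have [N HN] : exists N, forall y, G y -> Reg f y -> forall b', ~ Reg f b' ->
    ~ d b' y < / INR (S N).
  apply: (@finite_bound X G (fun y N => Reg f y -> forall b', ~ Reg f b' ->
    ~ d b' y < / INR (S N)) fG).
- move=> y N M NM H Ry b' nb' lt; apply: (H Ry b' nb'); have := invS_le _ _ NM; lra.
- move=> y _; case: (pselect (Reg f y)) => [Ry|nRy]; last by exists O.
  have [e [e0 He]] := Reg_open_ball _ _ Ry; have [M HM] := arch _ e0.
  exists M => _ b' nb' lt; apply: nb'; apply: He; rewrite dsym; lra.
have [n [Nn Gn]] := @inf_many X b G Kb fG N.
exists (a n); first by exists n.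
move=> x Gx; apply: contrapT => ne.
have [Rx [b' [nb' lt]]] := (Ha n).2 x (Gn x Gx) ne.
apply: (HN x Gx Rx b' nb'); have := invS_le _ _ Nn; lra.
Qed.

End Metric.

Theorem corollary4p2 (X : topologicalType) :
  metrizable X ->
  (S1 (@K_Omega X) (@K_Omega X) <-> vet1_omega (@Qp X)).
Proof.
move=> [d [d0 [dsep [dsym [dtri dopen]]]]]; split.
- exact: (@hard_dir X d d0 dsep dsym dtri dopen).
- exact: easy_dir.
Qed.
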